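(* Let $m,n$ be positive integers, let $r_b>0$ and $r_w>0$ be real numbers, and let $R_{th0}>0$ be a real number with $R_{th0}> m r_b + n r_w$. Define the sequence $(R^{(l)}_{th})_{l\ge 0}$ by $R^{(0)}_{th}=R_{th0}$ and, for $l\ge 1$, \[ \ln\big(R^{(l)}_{th}\big) = \ln(R_{th0}) - \frac{1}{mn}\sum_{i=1}^{m}\sum_{j=1}^{n}\ln\!\left(1-\frac{i r_b + j r_w}{R^{(l-1)}_{th}}\right). \] Then the sequence $(R^{(l)}_{th})_{l\ge0}$ converges, and its limit $R_{th\_array}$ is a solution of the equation \[ \ln(R_{th0})=\frac{1}{mn}\sum_{i=1}^{m}\sum_{j=1}^{n}\ln\big(R_{th\_array}-i r_b-j r_w\big). \]
   Context: This iteration is the paper's ''STMC threshold solver algorithm'' for computing a single read resistance threshold for an $m\times n$ crossbar memory array with wordline interconnect resistance $r_w$ and bitline interconnect resistance $r_b$ per cell; $R_{th0}$ is the optimal read resistance threshold when line resistance is ignored. (The paper's algorithm also stops after a fixed number of iterations or when successive iterates differ by at most a tolerance $\epsilon$; the lemma concerns the limit of the unstopped iteration.) *)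

(* Defs.v *)
From Stdlib Require Import Reals.
From Coquelicot Require Import Coquelicot.
Open Scope R_scope.

Definition avg_grid (m n : nat) (f : nat -> nat -> R) : R :=
  / (INR m * INR n) *
  sum_n_m (fun i => sum_n_m (fun j => f i j) 1 n) 1 m.

Definition stmc_step (m n : nat) (rb rw Rth0 Rold : R) : R :=
  exp (ln Rth0 - avg_grid m n
         (fun i j => ln (1 - (INR i * rb + INR j * rw) / Rold))).

Fixpoint stmc_seq (m n : nat) (rb rw Rth0 : R) (l : nat) : R :=
  match l with
  | O => Rth0
  | S l' => stmc_step m n rb rw Rth0 (stmc_seq m n rb rw Rth0 l')
  end.

(* Main.v *)
Require Import Defs.
From Stdlib Require Import Reals Lra Lia Psatz Arith.
From Coquelicot Require Import Coquelicot.
Open Scope R_scope.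

Lemma sum_le_loc (a b : nat -> R) n m :
  (forall k, (n <= k <= m)%nat -> a k <= b k) -> sum_n_m a n m <= sum_n_m b n m.
Proof.
  intros H.
  rewrite (sum_n_m_ext_loc b (fun k => Rmax (a k) (b k))).
  - apply sum_n_m_le. intros; apply Rmax_l.
  - intros k Hk. rewrite Rmax_right; auto.
Qed.

Lemma sum_plusR (a b : nat -> R) n m :
  sum_n_m (fun k => a k + b k) n m = sum_n_m a n m + sum_n_m b n m.
Proof. exact (sum_n_m_plus a b n m). Qed.

Lemma sum_scalR (K : R) (a : nat -> R) n m :
  sum_n_m (fun k => K * a k) n m = K * sum_n_m a n m.
Proof. exact (sum_n_m_mult_l K a n m). Qed.

Lemma sum_lim (u : nat -> nat -> R) (U : nat -> R) a b :
  (forall k, (a <= k <= b)%nat -> is_lim_seq (fun l => u l k) (U k)) ->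
  is_lim_seq (fun l => sum_n_m (u l) a b) (sum_n_m U a b).
Proof.
  induction b; intros H.
  - destruct a.
    + apply (is_lim_seq_ext (fun l => u l 0%nat)).
      { intros; now rewrite sum_n_n. }
      rewrite sum_n_n. apply H. lia.
    + apply (is_lim_seq_ext (fun _ => 0)).
      { intros; rewrite sum_n_m_zero by lia. reflexivity. }
      rewrite sum_n_m_zero by lia. apply is_lim_seq_const.
  - destruct (le_lt_dec a (S b)).
    + apply (is_lim_seq_ext (fun l => sum_n_m (u l) a b + u l (S b))).
      { intros; rewrite sum_n_Sm by lia. reflexivity. }
      rewrite sum_n_Sm by lia. apply is_lim_seq_plus'.
      * apply IHb. intros k Hk; apply H; lia.
      * apply H; lia.
    + apply (is_lim_seq_ext (fun _ => 0)).
      { intros; rewrite sum_n_m_zero by lia. reflexivity. }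
      rewrite sum_n_m_zero by lia. apply is_lim_seq_const.
Qed.

Section Avg.
Variables m n : nat.

Lemma avg_le (f g : nat -> nat -> R) :
  0 < INR m * INR n ->
  (forall i j, (1 <= i <= m)%nat -> (1 <= j <= n)%nat -> f i j <= g i j) ->
  avg_grid m n f <= avg_grid m n g.
Proof.
  intros Hmn H. unfold avg_grid. apply Rmult_le_compat_l.
  - left; apply Rinv_0_lt_compat; auto.
  - apply sum_le_loc. intros i Hi. apply sum_le_loc. intros j Hj. now apply H.
Qed.

Lemma avg_ext (f g : nat -> nat -> R) :
  (forall i j, (1 <= i <= m)%nat -> (1 <= j <= n)%nat -> f i j = g i j) ->
  avg_grid m n f = avg_grid m n g.
Proof.
  intros H. unfold avg_grid. f_equal.
  apply sum_n_m_ext_loc. intros i Hi. apply sum_n_m_ext_loc. intros j Hj. now apply H.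
Qed.

Lemma avg_plus (f g : nat -> nat -> R) :
  avg_grid m n (fun i j => f i j + g i j) = avg_grid m n f + avg_grid m n g.
Proof.
  unfold avg_grid. rewrite <- Rmult_plus_distr_l. f_equal.
  rewrite <- sum_plusR. apply sum_n_m_ext. intros i. apply sum_plusR.
Qed.

Lemma avg_scal (K : R) (f : nat -> nat -> R) :
  avg_grid m n (fun i j => K * f i j) = K * avg_grid m n f.
Proof.
  unfold avg_grid.
  rewrite (sum_n_m_ext _ (fun i => K * sum_n_m (fun j => f i j) 1 n)).
  - rewrite sum_scalR. ring.
  - intros i. apply sum_scalR.
Qed.

Lemma avg_const (K : R) : (0 < m)%nat -> (0 < n)%nat ->
  avg_grid m n (fun _ _ => K) = K.
Proof.
  intros Hm Hn. unfold avg_grid.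
  rewrite (sum_n_m_ext _ (fun _ => INR n * K)).
  - rewrite sum_n_m_const. replace (S m - 1)%nat with m by lia.
    assert (0 < INR m) by (apply lt_0_INR; lia).
    assert (0 < INR n) by (apply lt_0_INR; lia).
    field. lra.
  - intros i. rewrite sum_n_m_const. replace (S n - 1)%nat with n by lia. reflexivity.
Qed.

Lemma avg_lim (f : nat -> nat -> nat -> R) (F : nat -> nat -> R) :
  (forall i j, (1 <= i <= m)%nat -> (1 <= j <= n)%nat -> is_lim_seq (fun l => f l i j) (F i j)) ->
  is_lim_seq (fun l => avg_grid m n (f l)) (avg_grid m n F).
Proof.
  intros H. unfold avg_grid.
  apply (is_lim_seq_scal_l _ _ (Finite _)).
  apply (sum_lim (fun l i => sum_n_m (fun j => f l i j) 1 n)).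
  intros i Hi. apply (sum_lim (fun l j => f l i j)). intros j Hj. now apply H.
Qed.
End Avg.
Lemma ln_le_sub1 x : 0 < x -> ln x <= x - 1.
Proof. intros Hx. pose proof (exp_ineq1_le (ln x)). rewrite exp_ln in H; lra. Qed.

Lemma ln_ge_1_inv x : 0 < x -> 1 - / x <= ln x.
Proof. intros Hx. pose proof (ln_le_sub1 (/ x) (Rinv_0_lt_compat _ Hx)).
  rewrite ln_Rinv in H; lra. Qed.

Lemma der_cont (f : R -> R) (x : R) : ex_derive f x -> continuity_pt f x.
Proof. intros H. apply continuity_pt_filterlim. apply (ex_derive_continuous (K:=R_AbsRing) (V:=R_NormedModule)). exact H. Qed.

Lemma E_ineq x : 1/2 <= x < 1 -> (1 - x) * ln (1 - x) <= x * ln x.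
Proof.
  intros Hx.
  set (G := fun y => y * ln y / (1 - y) - ln (1 - y)).
  set (dG := fun y => (ln y + 2 * (1 - y)) / (1 - y) ^ 2).
  assert (D : forall y, 0 < y < 1 -> is_derive G y (dG y)).
  { intros y Hy. unfold G, dG. auto_derive; [lra|]. field_simplify; try lra.
  }
  assert (G0 : G (1/2) = 0).
  { unfold G. replace (1 - 1/2) with (1/2) by field. field. }
  destruct (MVT_gen G (1/2) x dG) as [c [Hc Hm]].
  { intros y. rewrite Rmin_left, Rmax_right by lra. intros Hy. apply D. lra. }
  { intros y. rewrite Rmin_left, Rmax_right by lra. intros Hy. apply der_cont.
    eexists. apply D. lra. }
  rewrite Rmin_left, Rmax_right in Hc by lra.
  assert (Hc0 : 0 < c < 1) by lra.
  assert (dG c >= 0).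
  { unfold dG. pose proof (ln_ge_1_inv c ltac:(lra)).
    assert (0 <= ln c + 2 * (1 - c)).
    { assert (1 - / c + 2 * (1 - c) = (2 * c - 1) * (1 - c) / c) by (field; lra).
      assert (0 <= (2 * c - 1) * (1 - c) / c).
      { apply Rmult_le_pos; [nra| left; apply Rinv_0_lt_compat; lra]. }
      lra. }
    apply Rle_ge. apply Rmult_le_pos; [lra|]. left. apply Rinv_0_lt_compat. nra. }
  rewrite G0 in Hm.
  assert (0 <= G x) by nra.
  unfold G in H0.
  assert (x * ln x / (1 - x) = x * ln x * / (1 - x)) by reflexivity.
  assert (Hinv : (1 - x) * / (1 - x) = 1) by (apply Rinv_r; lra).
  assert (H3 : 0 <= (1 - x) * (x * ln x / (1 - x) - ln (1 - x))) by (apply Rmult_le_pos; lra).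
  replace ((1 - x) * (x * ln x / (1 - x) - ln (1 - x))) with (x * ln x - (1 - x) * ln (1 - x)) in H3 by (field; lra).
  lra.
Qed.

Lemma KD s t : 1/2 <= s <= t -> t < 1 -> ln t * ln (1 - t) <= ln s * ln (1 - s).
Proof.
  intros Hs Ht.
  set (k := fun y => ln y * ln (1 - y)).
  set (dk := fun y => ln (1 - y) / y - ln y / (1 - y)).
  assert (D : forall y, 0 < y < 1 -> is_derive k y (dk y)).
  { intros y Hy. unfold k, dk. auto_derive; [lra|]. replace (1 + - y) with (1 - y) by ring. field. lra. }
  destruct (MVT_gen k s t dk) as [c [Hc Hm]].
  { intros y. rewrite Rmin_left, Rmax_right by lra. intros Hy. apply D. lra. }
  { intros y. rewrite Rmin_left, Rmax_right by lra. intros Hy. apply der_cont.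
    eexists. apply D. lra. }
  rewrite Rmin_left, Rmax_right in Hc by lra.
  assert (dk c <= 0).
  { unfold dk. pose proof (E_ineq c ltac:(lra)).
    replace (ln (1 - c) / c - ln c / (1 - c)) with (((1 - c) * ln (1 - c) - c * ln c) * / (c * (1 - c))) by (field; lra).
    assert (0 < / (c * (1 - c))) by (apply Rinv_0_lt_compat; nra).
    nra. }
  unfold k in Hm. nra.
Qed.

Lemma KL x y : 0 < x < y -> y < 1 -> 1 <= x + y ->
  ln y * ln (1 - y) <= ln x * ln (1 - x).
Proof.
  intros Hx Hy Hxy.
  destruct (Rle_dec (1/2) x).
  - apply KD; lra.
  - replace (ln x * ln (1 - x)) with (ln (1 - x) * ln (1 - (1 - x))).
    + apply KD; lra.
    + replace (1 - (1 - x)) with x by ring. ring.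
Qed.
Lemma bern r t : 0 < r -> 0 <= t <= 1 -> exp (t * ln r) <= 1 + t * (r - 1).
Proof.
  intros Hr Ht.
  set (s := t * r + 1 - t).
  assert (Hs : 0 < s) by (unfold s; nra).
  assert (H1 : ln r - ln s <= r / s - 1).
  { rewrite <- ln_div by lra. apply ln_le_sub1. apply Rdiv_lt_0_compat; lra. }
  assert (H2 : ln 1 - ln s <= 1 / s - 1).
  { rewrite <- ln_div by lra. apply ln_le_sub1. apply Rdiv_lt_0_compat; lra. }
  rewrite ln_1 in H2.
  assert (H3 : t * (r / s - 1) + (1 - t) * (1 / s - 1) = 0).
  { unfold s in *. field. lra. }
  assert (t * ln r <= ln s) by nra.
  replace (1 + t * (r - 1)) with s by (unfold s; ring).
  rewrite <- (exp_ln s) by lra.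
  destruct (Req_dec (t * ln r) (ln s)) as [E|E]; [rewrite E; lra|].
  left; apply exp_increasing; lra.
Qed.

Lemma exp_le_mono a b : a <= b -> exp a <= exp b.
Proof. intros [H|H]; [left; apply exp_increasing; auto| subst; lra]. Qed.

Lemma powconc y l t : 0 < y -> 0 <= l <= 1 -> 0 <= t <= 1 ->
  (1 - l) + l * exp (t * ln y) <= exp (t * ln (1 - l + l * y)).
Proof.
  intros Hy Hl Ht.
  set (s := 1 - l + l * y).
  assert (Hs : 0 < s) by (unfold s; nra).
  assert (E1 : exp (t * ln y) = exp (t * ln s) * exp (t * ln (y / s))).
  { rewrite <- exp_plus. f_equal. rewrite ln_div by lra. ring. }
  assert (E2 : 1 = exp (t * ln s) * exp (t * ln (1 / s))).
  { rewrite <- exp_plus. rewrite ln_div by lra. rewrite ln_1.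
    replace (t * ln s + t * (0 - ln s)) with 0 by ring. now rewrite exp_0. }
  pose proof (bern (y / s) t ltac:(apply Rdiv_lt_0_compat; lra) Ht) as B1.
  pose proof (bern (1 / s) t ltac:(apply Rdiv_lt_0_compat; lra) Ht) as B2.
  pose proof (exp_pos (t * ln s)) as P.
  assert (H3 : (1 - l) * (1 + t * (1 / s - 1)) + l * (1 + t * (y / s - 1)) = 1).
  { unfold s in *. field. lra. }
  rewrite E1. rewrite E2 at 1.
  assert (L1: 0 <= 1 - l) by lra.
  assert (exp (t * ln s) * ((1 - l) * exp (t * ln (1 / s)) + l * exp (t * ln (y / s)))
     <= exp (t * ln s) * ((1 - l) * (1 + t * (1 / s - 1)) + l * (1 + t * (y / s - 1)))).
  { apply Rmult_le_compat_l; [lra|]. apply Rplus_le_compat; apply Rmult_le_compat_l; lra. }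
  rewrite H3 in H. nra.
Qed.

Lemma lemA c C p q : 0 < c <= C -> 0 < p < q -> C * q < 1 ->
  ln (1 - C * p) * ln (1 - c * q) <= ln (1 - c * p) * ln (1 - C * q).
Proof.
  intros Hc Hpq HCq.
  assert (HCp : C * p < C * q) by nra.
  assert (Hcp : c * p <= C * p) by nra.
  assert (Hcq : c * q <= C * q) by nra.
  assert (LCp : ln (1 - C * p) < 0).
  { rewrite <- ln_1. apply ln_increasing; nra. }
  assert (Lcp1 : ln (1 - c * p) <= 0).
  { rewrite <- ln_1. apply ln_le; nra. }
  assert (Lcp2 : ln (1 - C * p) <= ln (1 - c * p)) by (apply ln_le; nra).
  set (t := ln (1 - c * p) / ln (1 - C * p)).
  assert (Hb : / ln (1 - C * p) < 0) by (apply Rinv_lt_0_compat; lra).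
  assert (Hbb : ln (1 - C * p) * / ln (1 - C * p) = 1) by (apply Rinv_r; lra).
  assert (Ht : 0 <= t <= 1).
  { unfold t, Rdiv. split; nra. }
  assert (Et : t * ln (1 - C * p) = ln (1 - c * p)).
  { unfold t. field. lra. }
  assert (Hl1 : 0 <= p / q <= 1).
  { split; [apply Rlt_le, Rdiv_lt_0_compat; lra|].
    apply (Rmult_le_reg_r q); [lra|]. unfold Rdiv. rewrite Rmult_assoc, Rinv_l by lra. lra. }
  pose proof (powconc (1 - C * q) (p / q) t ltac:(lra) Hl1 Ht) as PC.
  replace (1 - p / q + p / q * (1 - C * q)) with (1 - C * p) in PC by (field; lra).
  rewrite Et, exp_ln in PC by nra.
  assert (HH : exp (t * ln (1 - C * q)) <= 1 - c * q).
  { assert (Hl : 0 < p / q) by (apply Rdiv_lt_0_compat; lra).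
    assert (1 - c * p = 1 - p / q + p / q * (1 - c * q)) by (field; lra).
    nra. }
  assert (HH2 : t * ln (1 - C * q) <= ln (1 - c * q)).
  { rewrite <- (ln_exp (t * ln (1 - C * q))). apply ln_le; [apply exp_pos | exact HH]. }
  rewrite <- Et. nra.
Qed.

Definition Good m n rb rw a := (0 < m)%nat /\ (0 < n)%nat /\ 0 < rb /\ 0 < rw /\
   INR m * rb + INR n * rw < a.

Lemma grid_c m n rb rw i j : 0 < rb -> 0 < rw -> (1 <= i <= m)%nat -> (1 <= j <= n)%nat ->
  0 < INR i * rb + INR j * rw <= INR m * rb + INR n * rw.
Proof.
  intros Hb Hw Hi Hj.
  assert (1 <= INR i) by (apply (le_INR 1); lia).
  assert (1 <= INR j) by (apply (le_INR 1); lia).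
  assert (INR i <= INR m) by (apply le_INR; lia).
  assert (INR j <= INR n) by (apply le_INR; lia).
  split; nra.
Qed.

Lemma om_pos c R : 0 < R -> c < R -> 0 < 1 - c / R.
Proof. intros. replace (1 - c / R) with ((R - c) / R) by (field; lra).
  apply Rdiv_lt_0_compat; lra. Qed.

Lemma mn_pos m n : (0 < m)%nat -> (0 < n)%nat -> 0 < INR m * INR n.
Proof. intros. apply Rmult_lt_0_compat; apply lt_0_INR; lia. Qed.

Lemma C_pos m n rb rw : (0 < m)%nat -> (0 < n)%nat -> 0 < rb -> 0 < rw ->
  0 < INR m * rb + INR n * rw.
Proof. intros. assert (0 < INR m) by (apply lt_0_INR; lia).
  assert (0 < INR n) by (apply lt_0_INR; lia). nra. Qed.

Lemma F1 m n rb rw a R : Good m n rb rw a -> INR m * rb + INR n * rw < R ->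
  a <= stmc_step m n rb rw a R.
Proof.
  intros (Hm & Hn & Hb & Hw & Ha) HR. pose proof (C_pos m n rb rw Hm Hn Hb Hw).
  unfold stmc_step.
  assert (avg_grid m n (fun i j => ln (1 - (INR i * rb + INR j * rw) / R)) <= 0).
  { rewrite <- (avg_const m n 0 Hm Hn). apply avg_le; [now apply mn_pos|].
    intros i j Hi Hj. destruct (grid_c m n rb rw i j Hb Hw Hi Hj).
    rewrite <- ln_1. apply ln_le; [apply om_pos; lra|].
    assert (0 < (INR i * rb + INR j * rw) / R) by (apply Rdiv_lt_0_compat; lra). lra. }
  rewrite <- (exp_ln a) at 1 by lra. apply exp_le_mono. lra.
Qed.

Lemma F2 m n rb rw a R1 R2 : Good m n rb rw a -> INR m * rb + INR n * rw < R1 -> R1 <= R2 ->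
  stmc_step m n rb rw a R2 <= stmc_step m n rb rw a R1.
Proof.
  intros (Hm & Hn & Hb & Hw & Ha) HR HR2. pose proof (C_pos m n rb rw Hm Hn Hb Hw).
  unfold stmc_step. apply exp_le_mono.
  cut (avg_grid m n (fun i j => ln (1 - (INR i * rb + INR j * rw) / R1)) <=
       avg_grid m n (fun i j => ln (1 - (INR i * rb + INR j * rw) / R2))); [lra|].
  apply avg_le; [now apply mn_pos|].
  intros i j Hi Hj. destruct (grid_c m n rb rw i j Hb Hw Hi Hj).
  apply ln_le; [apply om_pos; lra|].
  unfold Rdiv. assert (/ R2 <= / R1) by (apply Rinv_le_contravar; lra). nra.
Qed.

Lemma step_lim m n rb rw a (x : nat -> R) L : Good m n rb rw a ->
  INR m * rb + INR n * rw < L -> is_lim_seq x L ->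
  is_lim_seq (fun l => stmc_step m n rb rw a (x l)) (stmc_step m n rb rw a L).
Proof.
  intros (Hm & Hn & Hb & Hw & Ha) HL Hx. pose proof (C_pos m n rb rw Hm Hn Hb Hw).
  unfold stmc_step.
  apply (is_lim_seq_continuous (fun z => exp (ln a - z))
     (fun l => avg_grid m n (fun i j => ln (1 - (INR i * rb + INR j * rw) / x l)))).
  { apply der_cont. auto_derive. auto. }
  apply (avg_lim m n (fun l i j => ln (1 - (INR i * rb + INR j * rw) / x l))).
  intros i j Hi Hj. destruct (grid_c m n rb rw i j Hb Hw Hi Hj).
  set (c := INR i * rb + INR j * rw).
  apply (is_lim_seq_continuous (fun z => ln (1 - c / z))); [|exact Hx].
  apply der_cont. auto_derive. split; [lra|]. split; [|auto].
  pose proof (om_pos c L ltac:(lra) ltac:(unfold c; lra)). lra.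
Qed.

Lemma nocyc m n rb rw a P Q : Good m n rb rw a ->
  INR m * rb + INR n * rw < P -> P < Q ->
  P = stmc_step m n rb rw a Q -> Q = stmc_step m n rb rw a P -> False.
Proof.
  intros G HP HPQ EP EQ.
  pose proof G as (Hm & Hn & Hb & Hw & Ha).
  set (C := INR m * rb + INR n * rw) in *.
  assert (HC : 0 < C) by (apply C_pos; auto).
  assert (Hmn := mn_pos m n Hm Hn).
  set (fQ := fun i j => ln (1 - (INR i * rb + INR j * rw) / Q)).
  set (fP := fun i j => ln (1 - (INR i * rb + INR j * rw) / P)).
  assert (LP : ln P = ln a - avg_grid m n fQ).
  { rewrite EP at 1. unfold stmc_step. now rewrite ln_exp. }
  assert (LQ : ln Q = ln a - avg_grid m n fP).
  { rewrite EQ at 1. unfold stmc_step. now rewrite ln_exp. }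
  assert (HiQ : / Q < / P) by (apply Rinv_lt_contravar; nra).
  assert (HiQ0 : 0 < / Q) by (apply Rinv_0_lt_compat; lra).
  assert (HCP : C * / P < 1).
  { apply (Rmult_lt_reg_r P); [lra|]. rewrite Rmult_assoc, Rinv_l by lra. lra. }
  assert (HCQ : C * / Q < 1) by nra.
  set (K := ln (1 - C / Q) - ln (1 - C / P)).
  assert (Ha1 : avg_grid m n fQ <= avg_grid m n (fun i j => fP i j + K)).
  { apply avg_le; auto. intros i j Hi Hj. destruct (grid_c m n rb rw i j Hb Hw Hi Hj) as [c0 c1]. fold C in c1.
    unfold fQ, fP, K. set (c := INR i * rb + INR j * rw) in *.
    unfold Rdiv.
    assert (c * / Q <= C * / Q) by (apply Rmult_le_compat_r; lra).
    assert (c * / P <= C * / P) by (apply Rmult_le_compat_r; lra).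
    assert (0 < 1 - c * / Q) by lra. assert (0 < 1 - c * / P) by lra.
    assert (0 < 1 - C * / Q) by lra. assert (0 < 1 - C * / P) by lra.
    assert ((C - c) * / Q <= (C - c) * / P) by (apply Rmult_le_compat_l; lra).
    assert ((1 - c * / Q) * (1 - C * / P) <= (1 - C * / Q) * (1 - c * / P)) by nra.
    assert (HL : ln ((1 - c * / Q) * (1 - C * / P)) <= ln ((1 - C * / Q) * (1 - c * / P)))
      by (apply ln_le; [apply Rmult_lt_0_compat|]; lra).
    rewrite !ln_mult in HL by lra. lra. }
  rewrite avg_plus, avg_const in Ha1 by auto.
  assert (Hsum : P * Q <= C * (P + Q)).
  { assert (ln Q + ln (1 - C / P) <= ln P + ln (1 - C / Q)) by (unfold K in Ha1; lra).
    unfold Rdiv in H.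
    assert (0 < 1 - C * / Q) by nra. assert (0 < 1 - C * / P) by nra.
    rewrite <- !ln_mult in H by lra.
    assert (Q * (1 - C * / P) <= P * (1 - C * / Q)).
    { destruct (Rle_dec (Q * (1 - C * / P)) (P * (1 - C * / Q))); auto.
      exfalso. assert (ln (P * (1 - C * / Q)) < ln (Q * (1 - C * / P))).
      { apply ln_increasing; [apply Rmult_lt_0_compat; lra| lra]. } lra. }
    assert (Q * P * Q * (1 - C * / P) <= P * P * Q * (1 - C * / Q)).
    { assert (0 < P * Q) by nra. nra. }
    replace (Q * P * Q * (1 - C * / P)) with (P * Q * Q - C * Q * Q) in H3 by (field; lra).
    replace (P * P * Q * (1 - C * / Q)) with (P * P * Q - C * P * P) in H3 by (field; lra).
    nra. }
  assert (Hb1 : avg_grid m n (fun i j => ln (1 - C / Q) * fP i j) <=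
                avg_grid m n (fun i j => ln (1 - C / P) * fQ i j)).
  { apply avg_le; auto. intros i j Hi Hj. destruct (grid_c m n rb rw i j Hb Hw Hi Hj) as [c0 c1]. fold C in c1.
    unfold fQ, fP. unfold Rdiv.
    pose proof (lemA (INR i * rb + INR j * rw) C (/ Q) (/ P) (conj c0 c1) (conj HiQ0 HiQ) HCP).
    lra. }
  rewrite !avg_scal in Hb1.
  assert (EA1 : avg_grid m n fP = ln a - ln Q) by lra.
  assert (EA2 : avg_grid m n fQ = ln a - ln P) by lra.
  rewrite EA1, EA2 in Hb1.
  set (x := C / Q). set (y := C / P).
  assert (Hx0 : 0 < x) by (apply Rdiv_lt_0_compat; lra).
  assert (Hxy : x < y) by (unfold x, y, Rdiv; nra).
  assert (Hy1 : y < 1) by (unfold y, Rdiv; lra).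
  assert (Hxy1 : 1 <= x + y).
  { unfold x, y. replace (C / Q + C / P) with (C * (P + Q) / (P * Q)) by (field; lra).
    apply (Rmult_le_reg_r (P * Q)); [nra|]. unfold Rdiv.
    rewrite Rmult_assoc, Rinv_l by nra. lra. }
  pose proof (KL x y (conj Hx0 Hxy) Hy1 Hxy1) as KK.
  set (al := ln a - ln C).
  assert (Hal : 0 < al) by (unfold al; pose proof (ln_increasing C a HC Ha); lra).
  assert (E1 : ln a - ln Q = al + ln x) by (unfold al, x; rewrite ln_div by lra; ring).
  assert (E2 : ln a - ln P = al + ln y) by (unfold al, y; rewrite ln_div by lra; ring).
  rewrite E1, E2 in Hb1. fold x y in Hb1.
  assert (ln (1 - y) < ln (1 - x)) by (apply ln_increasing; lra).
  nra.
Qed.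

Lemma fixeq m n rb rw a L : Good m n rb rw a -> INR m * rb + INR n * rw < L ->
  L = stmc_step m n rb rw a L ->
  ln a = avg_grid m n (fun i j => ln (L - INR i * rb - INR j * rw)).
Proof.
  intros G HL E. pose proof G as (Hm & Hn & Hb & Hw & Ha).
  assert (HC : 0 < INR m * rb + INR n * rw) by (apply C_pos; auto).
  assert (LL : ln L = ln a - avg_grid m n (fun i j => ln (1 - (INR i * rb + INR j * rw) / L))).
  { rewrite E at 1. unfold stmc_step. now rewrite ln_exp. }
  rewrite (avg_ext m n _ (fun i j => ln L + ln (1 - (INR i * rb + INR j * rw) / L))).
  - rewrite avg_plus, avg_const by auto. lra.
  - intros i j Hi Hj. destruct (grid_c m n rb rw i j Hb Hw Hi Hj).
    rewrite <- ln_mult; [|lra| apply om_pos; lra]. f_equal. field. lra.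
Qed.

Lemma lim_even_odd (u : nat -> R) (L : R) :
  is_lim_seq (fun k => u (2 * k)%nat) L -> is_lim_seq (fun k => u (S (2 * k))) L ->
  is_lim_seq u L.
Proof.
  intros He Ho. apply is_lim_seq_spec in He, Ho. apply is_lim_seq_spec.
  intros eps. destruct (He eps) as [N1 H1]. destruct (Ho eps) as [N2 H2].
  exists (2 * (N1 + N2))%nat. intros k Hk.
  destruct (Nat.Even_or_Odd k) as [[j Hj]|[j Hj]]; subst k.
  - apply H1. lia.
  - replace (2 * j + 1)%nat with (S (2 * j)) by lia. apply H2. lia.
Qed.

Theorem lemma1 (m n : nat) (rb rw Rth0 : R) :
  (0 < m)%nat -> (0 < n)%nat -> 0 < rb -> 0 < rw -> 0 < Rth0 ->
  INR m * rb + INR n * rw < Rth0 ->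
  exists Rarr : R,
    is_lim_seq (stmc_seq m n rb rw Rth0) (Finite Rarr) /\
    INR m * rb + INR n * rw < Rarr /\
    ln Rth0 = avg_grid m n (fun i j => ln (Rarr - INR i * rb - INR j * rw)).
Proof.
  intros Hm Hn Hb Hw Ha0 Ha.
  assert (G : Good m n rb rw Rth0) by (repeat split; auto).
  set (C := INR m * rb + INR n * rw) in *.
  set (x := stmc_seq m n rb rw Rth0).
  set (T := stmc_step m n rb rw Rth0).
  assert (xS : forall l, x (S l) = T (x l)) by reflexivity.
  assert (i1 : forall l, Rth0 <= x l).
  { induction l. - unfold x; simpl; lra. - rewrite xS. apply F1; auto; fold C; lra. }
  assert (i2 : forall l, x l <= x 1%nat).
  { destruct l. - rewrite xS. apply F1; auto; fold C; unfold x; simpl; lra.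
    - rewrite !xS. apply F2; [exact G| |apply i1]. fold C; unfold x; simpl; lra. }
  assert (i3 : forall k, x (2 * k)%nat <= x (2 * S k)%nat).
  { induction k.
    - apply i1.
    - replace (2 * S (S k))%nat with (S (S (2 * S k))) by lia.
      replace (2 * S k)%nat with (S (S (2 * k))) at 1 by lia.
      rewrite (xS (S (2 * S k)%nat)), (xS (S (2 * k)%nat)).
      apply F2; [exact G | pose proof (i1 (S (2 * S k)%nat)); fold C; lra | ].
      rewrite (xS (2 * S k)%nat), (xS (2 * k)%nat).
      apply F2; [exact G | pose proof (i1 (2 * k)%nat); fold C; lra | exact IHk]. }
  assert (i4 : forall k, x (S (2 * S k)) <= x (S (2 * k))).
  { intros k. rewrite !xS. apply F2; [exact G | pose proof (i1 (2 * k)%nat); fold C; lra | apply i3]. }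
  destruct (ex_finite_lim_seq_incr (fun k => x (2 * k)%nat) (x 1%nat)) as [Le HLe].
  { intros k. replace (S k) with (S k) by reflexivity. apply i3. }
  { intros k. apply i2. }
  destruct (ex_finite_lim_seq_decr (fun k => x (S (2 * k))) Rth0) as [Lo HLo].
  { intros k. apply i4. }
  { intros k. apply i1. }
  assert (bLe : Rth0 <= Le).
  { assert (H := is_lim_seq_le (fun _ => Rth0) _ Rth0 Le (fun k => i1 (2 * k)%nat) (is_lim_seq_const _) HLe). exact H. }
  assert (bLo : Rth0 <= Lo).
  { assert (H := is_lim_seq_le (fun _ => Rth0) _ Rth0 Lo (fun k => i1 (S (2 * k))) (is_lim_seq_const _) HLo). exact H. }
  assert (E1 : Lo = T Le).
  { pose proof (step_lim m n rb rw Rth0 _ Le G ltac:(fold C; lra) HLe) as H.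
    apply (is_lim_seq_ext _ (fun k => x (S (2 * k)))) in H; [|intros; reflexivity].
    apply is_lim_seq_unique in H. apply is_lim_seq_unique in HLo.
    rewrite HLo in H. injection H. auto. }
  assert (E2 : Le = T Lo).
  { pose proof (step_lim m n rb rw Rth0 _ Lo G ltac:(fold C; lra) HLo) as H.
    apply (is_lim_seq_ext _ (fun k => x (2 * S k)%nat)) in H;
      [|intros k; replace (2 * S k)%nat with (S (S (2 * k))) by lia; reflexivity].
    apply is_lim_seq_incr_1 in HLe.
    apply is_lim_seq_unique in H. apply is_lim_seq_unique in HLe.
    rewrite HLe in H. injection H. auto. }
  assert (EQ : Le = Lo).
  { destruct (Rtotal_order Le Lo) as [h|[h|h]]; auto; exfalso.
    - apply (nocyc m n rb rw Rth0 Le Lo G ltac:(fold C; lra) h E2 E1).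
    - apply (nocyc m n rb rw Rth0 Lo Le G ltac:(fold C; lra) h E1 E2). }
  rewrite <- EQ in HLo.
  exists Le. split; [|split].
  - apply lim_even_odd; auto.
  - fold C. lra.
  - apply fixeq; [exact G | fold C; lra | rewrite EQ at 1; exact E1].
Qed.
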